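(* Let $p\geq 5$ be an integer and $s=\frac1p$. There exist integers $n_0,n_1>0$ such that $[A_{n,s}^{-1}]=\left[2\left(n-\frac12\right)^s\right]$ for every even integer $n\geq n_0$, and $[B_{n,s}^{-1}]=\left[-2\left(n-\frac12\right)^s\right]$ for every odd integer $n\geq n_1$.
   Context: For an integer $n\geq1$ and real $0<s<1$: $A_{n,s}=\left(\frac{1}{n^s}-\frac{1}{(n+1)^s}\right)+\left(\frac{1}{(n+2)^s}-\frac{1}{(n+3)^s}\right)+\cdots$ and $B_{n,s}=\left(-\frac{1}{n^s}+\frac{1}{(n+1)^s}\right)+\left(-\frac{1}{(n+2)^s}+\frac{1}{(n+3)^s}\right)+\cdots$, i.e. $A_{n,s}=\sum_{k\geq 0}\frac{(-1)^k}{(n+k)^s}$ and $B_{n,s}=-A_{n,s}$. $[x]$ denotes the integer part (floor) of $x$. *)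

(* Defs.v *)
From Stdlib Require Import Reals.
From Coquelicot Require Import Coquelicot.
Open Scope R_scope.

Definition A_ns (n : nat) (s : R) : R :=
  Series (fun k : nat => (-1) ^ k / Rpower (INR (n + k)) s).

Definition B_ns (n : nat) (s : R) : R :=
  Series (fun k : nat => - ((-1) ^ k / Rpower (INR (n + k)) s)).

(* [x] = integer part (floor); Stdlib's Int_part x = up x - 1 = floor x *)
Definition floorR (x : R) : Z := Int_part x.

(* Main.v *)
Require Import Defs.
From Stdlib Require Import Reals ZArith Arith Lra Lia.
From Coquelicot Require Import Coquelicot.
Open Scope R_scope.

Lemma der_P (a x : R) : 0 < x -> is_derive (fun y => Rpower y a) x (a * Rpower x (a - 1)).
Proof. intro H. apply is_derive_Reals. now apply derivable_pt_lim_power. Qed.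

Lemma P_pos (a x : R) : 0 < Rpower x a.
Proof. unfold Rpower. apply exp_pos. Qed.

Lemma P_decr (a x y : R) : a <= 0 -> 0 < x <= y -> Rpower y a <= Rpower x a.
Proof.
  intros Ha Hxy.
  replace a with (- (- a)) by ring.
  rewrite (Rpower_Ropp x (-a)), (Rpower_Ropp y (-a)).
  apply Rinv_le_contravar. apply P_pos.
  apply Rle_Rpower_l; lra.
Qed.

Lemma mvt (g g1 : R -> R) (a b : R) : a <= b ->
  (forall y, a <= y <= b -> is_derive g y (g1 y)) ->
  exists c, a <= c <= b /\ g b - g a = g1 c * (b - a).
Proof.
  intros Hab Hd.
  destruct (MVT_gen g a b g1) as [c [Hc E]].
  - intros y Hy. rewrite Rmin_left in Hy by lra. rewrite Rmax_right in Hy by lra.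
    apply Hd; lra.
  - intros y Hy. rewrite Rmin_left in Hy by lra. rewrite Rmax_right in Hy by lra.
    apply continuity_pt_filterlim. apply (@ex_derive_continuous R_AbsRing R_NormedModule).
    exists (g1 y). apply Hd; lra.
  - rewrite Rmin_left in Hc by lra. rewrite Rmax_right in Hc by lra.
    exists c; split; auto.
Qed.

Lemma sd (g g1 g2 : R -> R) (x d : R) : 0 < d ->
  (forall y, x - d <= y <= x + d -> is_derive g y (g1 y)) ->
  (forall y, x - d <= y <= x + d -> is_derive g1 y (g2 y)) ->
  exists e eta, 0 <= e <= 2 * d /\ x - d <= eta <= x + d /\
    g (x + d) + g (x - d) - 2 * g x = d * e * g2 eta.
Proof.
  intros Hd H1 H2.
  destruct (mvt g g1 x (x + d)) as [c1 [Hc1 E1]]; [lra| intros; apply H1; lra |].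
  destruct (mvt g g1 (x - d) x) as [c2 [Hc2 E2]]; [lra| intros; apply H1; lra |].
  destruct (mvt g1 g2 c2 c1) as [c [Hc E]]; [lra| intros; apply H2; lra |].
  exists (c1 - c2), c. split; [lra|]. split; [lra|].
  replace (g (x + d) + g (x - d) - 2 * g x) with ((g (x + d) - g x) - (g x - g (x - d))) by ring.
  rewrite E1, E2. replace (x + d - x) with d by ring. replace (x - (x - d)) with d by ring.
  replace (g1 c1 * d - g1 c2 * d) with (d * (g1 c1 - g1 c2)) by ring.
  rewrite E. ring.
Qed.

Definition f s x := Rpower x (-s).
Definition f1 s x := -s * Rpower x (-s-1).
Definition f2 s x := s*(s+1) * Rpower x (-s-2).

Lemma der_f s x : 0 < x -> is_derive (f s) x (f1 s x).
Proof. intro H. unfold f, f1. now apply der_P. Qed.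

Lemma der_f1 s x : 0 < x -> is_derive (f1 s) x (f2 s x).
Proof.
  intro H. unfold f1, f2.
  replace (s * (s + 1) * Rpower x (- s - 2)) with (-s * ((-s-1) * Rpower x (-s-1-1))).
  - apply is_derive_scal. now apply der_P.
  - replace (-s-1-1) with (-s-2) by ring. ring.
Qed.

Lemma der_sub (g k : R -> R) x a b : is_derive g x a -> is_derive k x b ->
  is_derive (fun t => g t - k t) x (a - b).
Proof. intros H1 H2. apply (is_derive_minus g k x a b H1 H2). Qed.

Lemma der_opp (g : R -> R) x a : is_derive g x a -> is_derive (fun t => - g t) x (- a).
Proof. intros H1. apply (is_derive_opp g x a H1). Qed.

Lemma der_pc (g : R -> R) dg c t : is_derive g (c + t) dg -> is_derive (fun t => g (c + t)) t dg.
Proof.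
  intro Hg.
  assert (H1 : is_derive (fun t => c + t) t 1) by (auto_derive; auto; ring).
  pose proof (is_derive_comp g (fun t => c + t) t dg 1 Hg H1) as H.
  replace dg with (scal 1 dg). exact H.
  unfold scal; simpl; unfold mult; simpl. ring.
Qed.

Lemma der_mc (g : R -> R) dg c t : is_derive g (c - t) dg -> is_derive (fun t => g (c - t)) t (- dg).
Proof.
  intro Hg.
  assert (H1 : is_derive (fun t => c - t) t (-1)) by (auto_derive; auto; ring).
  pose proof (is_derive_comp g (fun t => c - t) t dg (-1) Hg H1) as H.
  replace (- dg) with (scal (-1) dg). exact H.
  unfold scal; simpl; unfold mult; simpl. ring.
Qed.

Definition h s x := (f s (x + /2) + f s (x - /2) - 2 * f s x) / 2.

Lemma f2_decr s x y : 0 <= s -> 0 < x <= y -> f2 s y <= f2 s x.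
Proof.
  intros Hs Hxy. unfold f2. apply Rmult_le_compat_l. nra.
  apply P_decr; lra.
Qed.

Lemma f2_pos s x : 0 <= s -> 0 <= f2 s x.
Proof. intros Hs. unfold f2. apply Rmult_le_pos. nra. left; apply P_pos. Qed.

Lemma h_bounds s x : 0 <= s -> 1 <= x ->
  0 <= h s x <= /4 * f2 s (x - /2).
Proof.
  intros Hs Hx.
  destruct (sd (f s) (f1 s) (f2 s) x (/2)) as [e [eta [He [Heta E]]]].
  - lra.
  - intros y Hy. apply der_f. lra.
  - intros y Hy. apply der_f1. lra.
  - unfold h. rewrite E.
    pose proof (f2_pos s eta Hs). pose proof (f2_decr s (x - /2) eta Hs ltac:(lra)).
    split. 
    + apply Rmult_le_pos; [|lra]. apply Rmult_le_pos; [|lra]. lra.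
    + replace (/ 2 * e * f2 s eta / 2) with (/4 * (e * f2 s eta)) by field.
      apply Rmult_le_compat_l; [lra|].
      replace (f2 s (x - /2)) with (1 * f2 s (x - /2)) by ring.
      apply Rmult_le_compat; lra.
Qed.

Lemma h_decr s x : 0 <= s -> 1 <= x -> h s (x + 1) <= h s x.
Proof.
  intros Hs Hx.
  set (c := x + /2).
  set (G := fun t => f s (c - t) - f s (c + t)).
  set (G1 := fun t => - f1 s (c - t) - f1 s (c + t)).
  set (G2 := fun t => f2 s (c - t) - f2 s (c + t)).
  destruct (sd G G1 G2 (/2) (/2)) as [e [eta [He [Heta E]]]].
  - lra.
  - intros y Hy. unfold G, G1. apply der_sub.
    + apply der_mc. apply der_f. unfold c; lra.
    + apply der_pc. apply der_f. unfold c; lra.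
  - intros y Hy. unfold G1, G2.
    replace (f2 s (c - y) - f2 s (c + y)) with (- - f2 s (c - y) - f2 s (c + y)) by ring.
    apply der_sub.
    + apply der_opp. apply der_mc. apply der_f1. unfold c; lra.
    + apply der_pc. apply der_f1. unfold c; lra.
  - assert (HG2 : 0 <= G2 eta).
    { unfold G2. pose proof (f2_decr s (c - eta) (c + eta) Hs ltac:(unfold c; lra)). lra. }
    assert (HR : 0 <= / 2 * e * G2 eta).
    { apply Rmult_le_pos; [|lra]. apply Rmult_le_pos; lra. }
    rewrite <- E in HR. unfold G in HR. unfold h.
    replace (c - (/2 + /2)) with (x - /2) in HR by (unfold c; lra).
    replace (c + (/2 + /2)) with (x + 1 + /2) in HR by (unfold c; lra).
    replace (c - (/2 - /2)) with (x + 1 - /2) in HR by (unfold c; lra).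
    replace (c + (/2 - /2)) with (x + 1 - /2) in HR by (unfold c; lra).
    replace (c - /2) with x in HR by (unfold c; lra).
    replace (c + /2) with (x + 1) in HR by (unfold c; lra).
    replace (x + /2) with (x + 1 - /2) by lra.
    lra.
Qed.

Lemma ser_comb (a b c : nat -> R) la lb lc :
  is_series a la -> is_series b lb -> is_series c lc ->
  is_series (fun k => /2 * a k - /2 * b k - c k) (/2 * la - /2 * lb - lc).
Proof.
  intros Ha Hb Hc.
  pose proof (@is_series_scal R_AbsRing R_NormedModule (/2) a la Ha) as H1.
  pose proof (@is_series_scal R_AbsRing R_NormedModule (/2) b lb Hb) as H2.
  pose proof (is_series_minus _ _ _ _ H1 H2) as H3.
  pose proof (is_series_minus _ _ _ _ H3 Hc) as H4.
  exact H4.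
Qed.

Lemma alt (u : nat -> R) : (forall k, u (S k) <= u k) -> is_lim_seq u 0 ->
  exists l : R, is_series (fun k => (-1)^k * u k) l /\ u 0%nat - u 1%nat <= l <= u 0%nat.
Proof.
  intros Hd Hl. apply is_lim_seq_Reals in Hl.
  destruct (alternated_series u Hd Hl) as [l Hs].
  exists l. split.
  - apply is_series_Reals. exact Hs.
  - pose proof (alternated_series_ineq u l 0 Hd Hl Hs) as H.
    simpl in H. unfold tg_alt in H. simpl in H. lra.
Qed.

Lemma lim_f s c : 0 < s -> 0 < c -> is_lim_seq (fun k => f s (c + INR k)) 0.
Proof.
  intros Hs Hc. apply is_lim_seq_Reals. intros eps Heps.
  destruct (INR_unbounded (Rpower (/eps) (/s))) as [N HN].
  exists N. intros k Hk. unfold Rdist, f. rewrite Rminus_0_r.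
  rewrite Rabs_pos_eq by (left; apply P_pos).
  rewrite Rpower_Ropp.
  assert (HK : Rpower (Rpower (/eps) (/s)) s = /eps).
  { rewrite Rpower_mult. replace (/s * s) with 1 by (field; lra).
    apply Rpower_1. apply Rinv_0_lt_compat; lra. }
  assert (Hlt : /eps < Rpower (c + INR k) s).
  { rewrite <- HK. apply Rlt_Rpower_l; [lra|]. split. apply P_pos.
    apply le_INR in Hk. lra. }
  replace eps with (/ / eps) by (field; lra).
  apply Rinv_lt_contravar; [|exact Hlt].
  apply Rmult_lt_0_compat. apply Rinv_0_lt_compat; lra. apply P_pos.
Qed.

Lemma f_decr s x y : 0 <= s -> 0 < x <= y -> f s y <= f s x.
Proof. intros. unfold f. apply P_decr; lra. Qed.

Lemma is_series_eqv (a : nat -> R) (l l' : R) : l = l' -> is_series a l -> is_series a l'.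
Proof. intros E H; subst; exact H. Qed.

Lemma A_repr s n : 0 < s -> s <= 1 -> (2 <= n)%nat ->
  exists D, is_series (fun k => (-1)^k / Rpower (INR (n+k)) s) (f s (INR n - /2) / 2 - D)
    /\ 0 <= D <= /4 * f2 s (INR n - /2).
Proof.
  intros Hs Hs1 Hn.
  assert (Hn2 : 2 <= INR n) by (apply le_INR in Hn; simpl in Hn; lra).
  set (m := INR n - /2).
  set (u1 := fun k => f s (m + INR k)).
  destruct (alt u1) as [l1 [H1 _]].
  { intro k. unfold u1. apply f_decr; [lra|]. rewrite S_INR. pose proof (pos_INR k). unfold m; lra. }
  { apply lim_f; unfold m; lra. }
  set (uh := fun k => h s (INR n + INR k)).
  destruct (alt uh) as [lh [Hh Hhb]].
  { intro k. unfold uh. rewrite S_INR. replace (INR n + (INR k + 1)) with ((INR n + INR k) + 1) by ring.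
    apply h_decr; [lra|]. pose proof (pos_INR k). lra. }
  { apply is_lim_seq_le_le with (u := fun _ => 0) (w := fun k => (s*(s+1)/4) * u1 k).
    - intro k. unfold uh, u1. pose proof (pos_INR k).
      destruct (h_bounds s (INR n + INR k)) as [Ha Hb]; [lra|lra|].
      split; [lra|]. eapply Rle_trans; [exact Hb|].
      unfold f2, f. replace (INR n + INR k - /2) with (m + INR k) by (unfold m; lra).
      replace (/ 4 * (s * (s + 1) * Rpower (m + INR k) (- s - 2))) with
        ((s*(s+1)/4) * Rpower (m + INR k) (- s - 2)) by field.
      apply Rmult_le_compat_l. nra. apply Rle_Rpower. unfold m; lra. lra.
    - apply is_lim_seq_const.
    - replace (Finite 0) with (Rbar_mult (s*(s+1)/4) 0) by (simpl; f_equal; ring).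
      apply is_lim_seq_scal_l. apply lim_f; unfold m; lra. }
  set (a := fun k => (-1)^k * u1 k).
  assert (H2 : is_series (fun k => a (S k)) (l1 - f s m)).
  { apply is_series_incr_1.
    assert (Ha0 : a 0%nat = f s m) by (unfold a, u1; simpl; rewrite Rplus_0_r; ring).
    rewrite Ha0. apply (is_series_eqv _ l1). unfold plus; simpl. ring. exact H1. }
  exists lh. split.
  - pose proof (ser_comb _ _ _ _ _ _ H1 H2 Hh) as H.
    replace (f s m / 2 - lh) with (/ 2 * l1 - / 2 * (l1 - f s m) - lh) by field.
    eapply is_series_ext; [|exact H].
    intro k. simpl. unfold a, u1, uh, h. rewrite plus_INR, S_INR.
    replace (m + (INR k + 1)) with (INR n + INR k + /2) by (unfold m; lra).
    replace (m + INR k) with (INR n + INR k - /2) by (unfold m; lra).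
    assert (Ef: f s (INR n + INR k) = / Rpower (INR n + INR k) s) by (unfold f; apply Rpower_Ropp).
    rewrite Ef. simpl. field.
    apply Rgt_not_eq, P_pos.
  - pose proof (h_bounds s (INR n)) as Hb. unfold uh in Hhb. simpl in Hhb.
    rewrite Rplus_0_r in Hhb.
    destruct Hb as [Hb1 Hb2]; [lra|lra|].
    pose proof (h_decr s (INR n) ltac:(lra) ltac:(lra)). unfold m. lra.
Qed.

Lemma powdiff q a b M : 0 <= a <= M -> 0 <= b <= M ->
  Rabs (a^(S q) - b^(S q)) <= INR (S q) * M^q * Rabs (a - b).
Proof.
  intros Ha Hb. induction q as [|q IH].
  - simpl. rewrite !Rmult_1_r. lra.
  - replace (a ^ S (S q) - b ^ S (S q)) with (a * (a^(S q) - b^(S q)) + b^(S q) * (a - b)) by (simpl; ring).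
    eapply Rle_trans; [apply Rabs_triang|].
    rewrite !Rabs_mult.
    rewrite (Rabs_pos_eq a) by lra. rewrite (Rabs_pos_eq (b^(S q))) by (apply pow_le; lra).
    assert (HM : 0 <= M) by lra.
    assert (E1 : a * Rabs (a ^ S q - b ^ S q) <= M * (INR (S q) * M ^ q * Rabs (a - b))).
    { apply Rmult_le_compat; try lra. apply Rabs_pos. }
    assert (E2 : b ^ S q * Rabs (a - b) <= M ^ S q * Rabs (a - b)).
    { apply Rmult_le_compat_r. apply Rabs_pos. apply pow_incr; lra. }
    rewrite (S_INR (S q)). rewrite S_INR in *. change (M ^ S q) with (M * M^q) in *. nra.
Qed.

Lemma not_int (q n : nat) (k : Z) : (1 <= q)%nat ->
  (k ^ (Z.of_nat (S q)) <> 2 ^ (Z.of_nat q) * (2 * Z.of_nat n - 1))%Z.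
Proof.
  intros Hq E.
  destruct (Z.Even_or_Odd k) as [[j Hj] | [j Hj]].
  - subst k. rewrite Z.pow_mul_l in E.
    rewrite Nat2Z.inj_succ, Z.pow_succ_r in E by lia.
    replace (2 * 2 ^ Z.of_nat q * j ^ Z.succ (Z.of_nat q))%Z
      with (2 ^ Z.of_nat q * (2 * j ^ Z.succ (Z.of_nat q)))%Z in E by ring.
    apply Z.mul_reg_l in E; [lia|]. apply Z.pow_nonzero; lia.
  - assert (Ho : Z.odd (k ^ Z.of_nat (S q)) = true).
    { rewrite Z.odd_pow by lia. subst k. rewrite Z.add_comm, Z.odd_add_mul_2. reflexivity. }
    rewrite E in Ho. rewrite Z.odd_mul in Ho.
    replace (Z.of_nat q) with (Z.succ (Z.of_nat q - 1)) in Ho by lia.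
    rewrite Z.pow_succ_r in Ho by lia. rewrite Z.odd_mul in Ho. simpl in Ho. discriminate.
Qed.

Lemma IZR_ge1 (z : Z) : z <> 0%Z -> 1 <= Rabs (IZR z).
Proof.
  intro H. rewrite Rabs_Zabs. apply IZR_le. lia.
Qed.

Lemma dist_int (q n : nat) (t : R) (k : Z) : (1 <= q)%nat -> 0 < t ->
  t ^ (S q) = INR n - /2 -> 0 <= IZR k <= 2 * t + 1 ->
  / (INR (S q) * (2 * t + 1) ^ q) <= Rabs (IZR k - 2 * t).
Proof.
  intros Hq Ht Htp Hk.
  assert (HP : 0 < INR (S q) * (2 * t + 1) ^ q).
  { apply Rmult_lt_0_compat. apply lt_0_INR; lia. apply pow_lt; lra. }
  pose proof (powdiff q (IZR k) (2 * t) (2 * t + 1) ltac:(lra) ltac:(lra)) as H1.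
  assert (H2 : 1 <= Rabs (IZR k ^ S q - (2 * t) ^ S q)).
  { rewrite Rpow_mult_distr, Htp, pow_IZR.
    replace (2 ^ S q * (INR n - / 2)) with (IZR (2 ^ (Z.of_nat q) * (2 * Z.of_nat n - 1))).
    - rewrite <- minus_IZR. apply IZR_ge1. pose proof (not_int q n k Hq). lia.
    - rewrite mult_IZR, <- pow_IZR, minus_IZR, mult_IZR, <- INR_IZR_INZ. simpl. field. }
  apply (Rmult_le_reg_l (INR (S q) * (2 * t + 1) ^ q)); [exact HP|].
  rewrite Rinv_r by lra. lra.
Qed.

Lemma Int_part_unique r z : IZR z <= r < IZR z + 1 -> Int_part r = z.
Proof.
  intro H. unfold Int_part.
  assert (E : (z + 1)%Z = up r).
  { apply tech_up; rewrite plus_IZR; simpl; lra. }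
  lia.
Qed.

Lemma floor_close (X Y d : R) : 0 < X ->
  (forall k : Z, 0 <= IZR k <= X + 1 -> d <= Rabs (IZR k - X)) ->
  Rabs (Y - X) < d ->
  Int_part Y = Int_part X /\ Int_part (- Y) = Int_part (- X).
Proof.
  intros HX Hd HYX.
  destruct (base_Int_part X) as [B1 B2].
  set (k := Int_part X) in *.
  assert (Hk0 : (0 <= k)%Z).
  { assert (-1 < IZR k) by lra. apply lt_IZR in H. lia. }
  apply IZR_le in Hk0.
  pose proof (Hd k ltac:(lra)) as D1.
  pose proof (Hd (k + 1)%Z ltac:(rewrite plus_IZR; simpl; lra)) as D2.
  rewrite plus_IZR in D2. simpl in D2.
  rewrite Rabs_left1 in D1 by lra. rewrite Rabs_pos_eq in D2 by lra.
  apply Rabs_def2 in HYX. destruct HYX as [Y1 Y2].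
  split.
  - apply Int_part_unique. lra.
  - rewrite (Int_part_unique (- Y) (- k - 1)); [rewrite (Int_part_unique (- X) (- k - 1)); auto|];
    rewrite minus_IZR, opp_IZR; simpl; lra.
Qed.

Lemma frac_lt u v w : 0 < v -> 0 < w -> u * w < v -> u / v < / w.
Proof.
  intros Hv Hw H. apply (Rmult_lt_reg_r (v * w)). nra.
  replace (u / v * (v * w)) with (u * w) by (field; lra).
  replace (/ w * (v * w)) with v by (field; lra). exact H.
Qed.

Lemma core (q n : nat) : (4 <= q)%nat -> (4 * S q * 3^q + 1 <= n)%nat ->
  let s := / INR (S q) in let X := 2 * Rpower (INR n - /2) s in
  0 < X /\ Rabs (/ A_ns n s - X) < / (INR (S q) * (X + 1)^q) /\
  (forall k : Z, 0 <= IZR k <= X + 1 -> / (INR (S q) * (X + 1)^q) <= Rabs (IZR k - X)).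
Proof.
  intros Hq Hn s X.
  set (Q := INR (S q)).
  assert (HQ : 5 <= Q) by (unfold Q; apply le_INR in Hq; rewrite S_INR; simpl in Hq; lra).
  assert (Hs : 0 < s) by (unfold s; fold Q; apply Rinv_0_lt_compat; lra).
  assert (Hs1 : s <= 1) by (unfold s; fold Q; rewrite <- Rinv_1; apply Rinv_le_contravar; lra).
  assert (H3 : 1 <= 3 ^ q) by (apply pow_R1_Rle; lra).
  assert (HnR : 4 * Q * 3^q + 1 <= INR n).
  { apply le_INR in Hn. rewrite plus_INR, !mult_INR, pow_INR in Hn. simpl in Hn.
    unfold Q. replace 3 with (1+1+1) by ring. simpl. lra. }
  assert (Hn2 : (2 <= n)%nat).
  { apply INR_le. simpl. nra. }
  set (m := INR n - /2) in *.
  assert (Hm : 4 * Q * 3^q < m) by (unfold m; lra).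
  assert (Hm1 : 20 <= m) by nra.
  set (t := Rpower m s).
  assert (Ht : 0 < t) by apply P_pos.
  assert (Htp : t ^ (S q) = m).
  { unfold t. rewrite <- Rpower_pow by apply P_pos. rewrite Rpower_mult.
    fold Q. replace (s * Q) with 1 by (unfold s; fold Q; field; lra). apply Rpower_1; lra. }
  assert (Ht1 : 1 <= t).
  { unfold t. replace 1 with (Rpower 1 s) at 1.
    apply Rle_Rpower_l; lra. unfold Rpower. rewrite ln_1, Rmult_0_r. apply exp_0. }
  assert (HX : X = 2 * t) by reflexivity.
  destruct (A_repr s n Hs Hs1 Hn2) as [D [HS HD]].
  fold m in HS, HD.
  assert (HA : A_ns n s = f s m / 2 - D) by (unfold A_ns; apply is_series_unique; exact HS).
  assert (Hf : f s m = / t) by (unfold f, t; apply Rpower_Ropp).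
  assert (Hf2 : f2 s m = s * (s + 1) * (/ t * / (m * m))).
  { unfold f2. replace (- s - 2) with (- s + - (2)) by ring. rewrite Rpower_plus.
    rewrite !Rpower_Ropp. fold t. 
    assert (E : Rpower m (INR 2) = m ^ 2) by (apply Rpower_pow; lra).
    simpl INR in E. replace (1 + 1) with 2 in E by ring. rewrite E. simpl. rewrite Rmult_1_r. ring. }
  set (w := / t * / (m * m)) in *.
  assert (Hw : 0 < w) by (unfold w; apply Rmult_lt_0_compat; apply Rinv_0_lt_compat; nra).
  set (a := / (2 * t)).
  assert (Ha : 0 < a) by (unfold a; apply Rinv_0_lt_compat; lra).
  assert (HDa : D <= a / (m * m)).
  { replace (a / (m * m)) with (w / 2) by (unfold a, w; field; nra).
    rewrite Hf2 in HD. assert (Hss : s * (s + 1) <= 2) by nra.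
    assert (0 <= (2 - s * (s + 1)) * w) by (apply Rmult_le_pos; lra). nra. }
  assert (HDa2 : D <= a / 2).
  { eapply Rle_trans; [exact HDa|]. apply Rmult_le_compat_l; [lra|].
    apply Rinv_le_contravar; nra. }
  assert (HAa : A_ns n s = a - D) by (rewrite HA, Hf; unfold a; field; lra).
  set (B := (X + 1) ^ q).
  assert (HB : 0 < B) by (unfold B; apply pow_lt; lra).
  assert (HtB : t * B <= 3 ^ q * m).
  { unfold B. rewrite HX. rewrite <- Htp.
    apply Rle_trans with (t * (3 * t) ^ q).
    - apply Rmult_le_compat_l; [lra|]. apply pow_incr; lra.
    - rewrite Rpow_mult_distr. simpl. lra. }
  assert (Hkey : 4 * Q * (t * B) < m * m).
  { apply Rle_lt_trans with (4 * Q * (3 ^ q * m)).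
    - apply Rmult_le_compat_l; lra.
    - replace (4 * Q * (3 ^ q * m)) with ((4 * Q * 3 ^ q) * m) by ring.
      apply Rmult_lt_compat_r; lra. }
  split; [lra|]. split.
  - rewrite HAa.
    assert (HE : / (a - D) - X = D / (a * (a - D))).
    { replace X with (/ a) by (rewrite HX; unfold a; field; lra).
      field. split; lra. }
    rewrite HE.
    assert (Hpos : 0 < a * (a - D)) by nra.
    rewrite Rabs_pos_eq.
    2:{ apply Rmult_le_pos; [lra|]. left. apply Rinv_0_lt_compat; lra. }
    apply frac_lt; [exact Hpos| nra |].
    assert (E1 : Q * B / (m * m) < a / 2).
    { replace (a / 2) with (/ (4 * t)) by (unfold a; field; lra).
      apply frac_lt; nra. }
    apply Rle_lt_trans with (a / (m * m) * (Q * B)).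
    + apply Rmult_le_compat_r; nra.
    + apply Rlt_le_trans with (a * (a / 2)).
      * replace (a / (m * m) * (Q * B)) with (a * (Q * B / (m * m))) by (field; nra).
        apply Rmult_lt_compat_l; lra.
      * apply Rmult_le_compat_l; lra.
  - intros k Hk. rewrite HX in *. unfold B. rewrite HX. unfold Q.
    apply (dist_int q n t k); try lia; try lra.
    fold m. exact Htp.
Qed.

Theorem corollary3p3 (p : nat) (hp : (5 <= p)%nat) :
  let s := / INR p in
  exists n0 n1 : nat, (0 < n0)%nat /\ (0 < n1)%nat /\
    (forall n : nat, (n0 <= n)%nat -> Nat.Even n ->
       floorR (/ A_ns n s) = floorR (2 * Rpower (INR n - / 2) s)) /\
    (forall n : nat, (n1 <= n)%nat -> Nat.Odd n ->
       floorR (/ B_ns n s) = floorR (- 2 * Rpower (INR n - / 2) s)).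
Proof.
  intros s. destruct p as [|q]; [lia|].
  exists (4 * S q * 3^q + 1)%nat, (4 * S q * 3^q + 1)%nat.
  split; [lia|]. split; [lia|]. split.
  - intros n Hn _.
    destruct (core q n ltac:(lia) Hn) as [HX [Hc Hd]].
    unfold floorR. exact (proj1 (floor_close _ _ _ HX Hd Hc)).
  - intros n Hn _.
    destruct (core q n ltac:(lia) Hn) as [HX [Hc Hd]].
    unfold floorR.
    assert (EB : B_ns n s = - A_ns n s) by (unfold B_ns, A_ns; apply Series_opp).
    rewrite EB, Rinv_opp.
    replace (- 2 * Rpower (INR n - / 2) s) with (- (2 * Rpower (INR n - / 2) s)) by ring.
    exact (proj2 (floor_close _ _ _ HX Hd Hc)).
Qed.
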